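(* Let $w\in S_\infty$ and let $D\in\mathcal P(w)$. If $D'$ is obtained from $D$ by applying a chute move of type 1, 2 or 3, or the inverse of a chute move of type 1, 2 or 3, then $D'\in\mathcal P(w)$.
   Context: Permutations: $S_\infty=\bigcup_n S_n$ is generated by the simple transpositions $s_a=(a\ a{+}1)$, $a\ge 1$; $l(w)$ is the Coxeter length of $w$ (minimal number of simple transpositions whose product is $w$). A pipe dream is a finite subset $D\subset\mathbb{Z}_{>0}\times\mathbb{Z}_{>0}$; its elements $(r,c)$ are called crosses (in row $r$, column $c$), and $|D|$ is the number of crosses. The reading word of $D$ is obtained by listing the crosses row by row from top to bottom ($r=1,2,\dots$), within each row from right to left (decreasing $c$), and recording for each cross $(r,c)$ its antidiagonal index $r+c-1$; this gives a word $(a_1,\dots,a_k)$ with $k=|D|$. For $u\in S_\infty$ put $u\star s_a=us_a$ if $l(us_a)=l(u)+1$ and $u\star s_a=u$ otherwise. The Demazure product of $D$ is $\delta(D)=(\cdots((e\star s_{a_1})\star s_{a_2})\cdots)\star s_{a_k}$, where $e$ is the identity. For $w\in S_\infty$, $\mathcal P(w)=\{D \text{ pipe dream}:\delta(D)=w\}$. Chute moves: fix rows $m,m+1$ and columns $c<d$, and suppose $(m,j)\in D$ and $(m+1,j)\in D$ for every $c<j<d$. - Type 1 applies if $(m,c)\notin D$, $(m+1,c)\notin D$, $(m,d)\in D$, $(m+1,d)\notin D$; its result is $(D\setminus\{(m,d)\})\cup\{(m+1,c)\}$. - Type 2 applies if $(m,c)\notin D$, $(m+1,c)\in D$, $(m,d)\in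 D$, $(m+1,d)\notin D$; its result is $D\setminus\{(m,d)\}$. - Type 3 applies under the same conditions as type 2; its result is $D\setminus\{(m+1,c)\}$. The inverse of a chute move of a given type (with given $m,c,d$) is the operation sending the result back to the original configuration (e.g. the inverse of type 2 adds the cross $(m,d)$ to a pipe dream with $(m,c)\notin D$, $(m+1,c)\in D$, $(m,d)\notin D$, $(m+1,d)\notin D$ and all interior boxes of the rectangle filled). *)

(* Defs.v *)
From mathcomp Require Import all_boot.
From Stdlib Require Import ClassicalEpsilon.
Set Implicit Arguments. Unset Strict Implicit. Unset Printing Implicit Defensive.

(* Permutations of the positive integers with finite support are represented
   as functions nat -> nat (the value at 0 is irrelevant: all generators fix 0). *)
Definition perm_fun := nat -> nat.

Definition idp : perm_fun := fun i => i.

Definition mulp (u v : perm_fun) : perm_fun := fun i => u (v i).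

Definition stransp (a : nat) : perm_fun :=
  fun i => if i == a then a.+1 else if i == a.+1 then a else i.

Fixpoint wordprod (r : seq nat) : perm_fun :=
  match r with
  | [::] => idp
  | a :: r' => mulp (stransp a) (wordprod r')
  end.

Definition valid_word (r : seq nat) : bool := all (fun a => 0 < a) r.

Definition in_Sinf (w : perm_fun) : Prop :=
  exists r, valid_word r /\ wordprod r = w.

Definition is_coxlen (w : perm_fun) (k : nat) : Prop :=
  (exists r, valid_word r /\ size r = k /\ wordprod r = w) /\
  (forall r, valid_word r -> wordprod r = w -> k <= size r).

Definition len_up (u : perm_fun) (a : nat) : Prop :=
  exists k, is_coxlen u k /\ is_coxlen (mulp u (stransp a)) k.+1.

Definition star (u : perm_fun) (a : nat) : perm_fun :=
  if excluded_middle_informative (len_up u a) then mulp u (stransp a) else u.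

(* Pipe dreams: finite subsets of Z>0 x Z>0, given as duplicate-free lists
   of crosses (row, column) with positive coordinates. *)
Definition pipe_dream (D : seq (nat * nat)) : bool :=
  uniq D && all (fun p => (0 < p.1) && (0 < p.2)) D.

Definition read_le (p q : nat * nat) : bool :=
  (p.1 < q.1) || ((p.1 == q.1) && (q.2 <= p.2)).

Definition reading_word (D : seq (nat * nat)) : seq nat :=
  map (fun p => p.1 + p.2 - 1) (sort read_le D).

Definition demazure (D : seq (nat * nat)) : perm_fun :=
  foldl star idp (reading_word D).

Definition in_P (w : perm_fun) (D : seq (nat * nat)) : Prop :=
  pipe_dream D /\ demazure D = w.

Definition chute_frame (D : seq (nat * nat)) (m c d : nat) : Prop :=
  0 < m /\ 0 < c /\ c < d /\
  (forall j, c < j -> j < d -> ((m, j) \in D) /\ ((m.+1, j) \in D)).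

(* D' is the result of a chute move of type 1 applied to D (rows m, m+1,
   columns c < d). Results are compared as sets. *)
Definition chute1 (D D' : seq (nat * nat)) (m c d : nat) : Prop :=
  chute_frame D m c d /\
  (m, c) \notin D /\ (m.+1, c) \notin D /\ (m, d) \in D /\ (m.+1, d) \notin D /\
  (forall x, (x \in D') = ((x != (m, d)) && (x \in D)) || (x == (m.+1, c))).

Definition chute2 (D D' : seq (nat * nat)) (m c d : nat) : Prop :=
  chute_frame D m c d /\
  (m, c) \notin D /\ (m.+1, c) \in D /\ (m, d) \in D /\ (m.+1, d) \notin D /\
  (forall x, (x \in D') = (x != (m, d)) && (x \in D)).

Definition chute3 (D D' : seq (nat * nat)) (m c d : nat) : Prop :=
  chute_frame D m c d /\
  (m, c) \notin D /\ (m.+1, c) \in D /\ (m, d) \in D /\ (m.+1, d) \notin D /\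
  (forall x, (x \in D') = (x != (m.+1, c)) && (x \in D)).

Definition chute_move (D D' : seq (nat * nat)) : Prop :=
  exists m c d, chute1 D D' m c d \/ chute2 D D' m c d \/ chute3 D D' m c d.

Definition inv_chute_move (D D' : seq (nat * nat)) : Prop := chute_move D' D.

(* Main.v *)
Require Import Defs.
From mathcomp Require Import all_boot zify.
From Stdlib Require Import FunctionalExtensionality ClassicalEpsilon.
Set Implicit Arguments. Unset Strict Implicit. Unset Printing Implicit Defensive.

Lemma stransp_inv a i : stransp a (stransp a i) = i.
Proof. rewrite /stransp; case: (i =P a) => [->|Ha]; first by rewrite eqxx; case: eqP; lia.
case: (i =P a.+1) => [->|Hb]; first by rewrite eqxx.
by do 2! case: eqP => //; lia.
Qed.

Lemma stransp_inj a : injective (stransp a).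
Proof. exact: (can_inj (stransp_inv a)). Qed.

Lemma stransp_o a i : i != a -> i != a.+1 -> stransp a i = i.
Proof. by rewrite /stransp => /negbTE -> /negbTE ->. Qed.

Lemma ms_a (u : perm_fun) a : mulp u (stransp a) a = u a.+1.
Proof. by rewrite /mulp /stransp eqxx. Qed.
Lemma ms_a1 (u : perm_fun) a : mulp u (stransp a) a.+1 = u a.
Proof. rewrite /mulp /stransp eqxx; case: eqP => //; lia. Qed.
Lemma ms_o (u : perm_fun) a i : i != a -> i != a.+1 -> mulp u (stransp a) i = u i.
Proof. by move=> H1 H2; rewrite /mulp stransp_o. Qed.

Lemma wordprod_rcons r a : wordprod (rcons r a) = mulp (wordprod r) (stransp a).
Proof. by elim: r => [|b r IH] //=; rewrite IH. Qed.

Lemma wordprod_inj r : injective (wordprod r).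
Proof. elim: r => [|a r IH] //= x y; rewrite /mulp => /stransp_inj; exact: IH. Qed.

Definition bnd (r : seq nat) := foldr (fun a n => maxn a.+2 n) 0 r.
Lemma bnd_all r : all (fun a => a.+1 < bnd r) r.
Proof.
elim: r => //= a r IH; apply/andP; split; first by rewrite leq_max leqnn.
by apply: sub_all IH => b /= H; rewrite leq_max H orbT.
Qed.
Lemma all_mono N M (r : seq nat) : N <= M -> all (fun a => a.+1 < N) r -> all (fun a => a.+1 < M) r.
Proof. by move=> H; apply: sub_all => b /= Hb; apply: leq_trans H. Qed.

Lemma wordprod_fix r N : all (fun a => a.+1 < N) r -> forall i, N <= i -> wordprod r i = i.
Proof.
elim: r => //= a r IH /andP[Ha Hr] i Hi. rewrite /mulp IH // stransp_o //; lia.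
Qed.

Lemma wordprod0 r : valid_word r -> wordprod r 0 = 0.
Proof. elim: r => //= a r IH /andP[Ha Hr]; rewrite /mulp IH // stransp_o //; lia. Qed.

Definition bounded N (u : perm_fun) := (forall i, N <= i -> u i = i) /\ injective u.

Lemma bounded_lt N u i : bounded N u -> i < N -> u i < N.
Proof.
move=> [Hf Hi] Hl. rewrite ltnNge; apply/negP => H.
have := Hf _ H => /Hi E. lia.
Qed.

Definition pairsN N := [seq (i,j) | i <- iota 0 N, j <- iota 0 N].
Definition invb (u : perm_fun) (p : nat * nat) : nat := (p.1 < p.2) && (u p.2 < u p.1).
Definition inv N u := \sum_(p <- pairsN N) invb u p.

Lemma mem_pairsN N p : (p \in pairsN N) = (p.1 < N) && (p.2 < N).
Proof.
case: p => i j /=; apply/allpairsP/andP => [[[x y] /= [Hx Hy [-> ->]]]|[Hi Hj]].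
  by rewrite mem_iota in Hx; rewrite mem_iota in Hy; lia.
by exists (i, j); rewrite /= !mem_iota; split => //; lia.
Qed.

Lemma uniq_pairsN N : uniq (pairsN N).
Proof. by apply: allpairs_uniq; rewrite ?iota_uniq // => -[? ?] [? ?] _ _ /= [-> ->]. Qed.

Lemma inv_ext N M u : bounded N u -> N <= M -> inv M u = inv N u.
Proof.
move=> Hb HNM; rewrite /inv (bigID (fun p => p \in pairsN N)) /=.
rewrite [X in _ + X]big1 ?addn0; last first.
  case=> i j; rewrite mem_pairsN /invb /= => Hn; apply/eqP; rewrite eqb0; apply/negP => /andP[Hij Hu].
  case: Hb => [Hf Hinj].
  case: (leqP N j) => Hj; last by lia.
  rewrite (Hf j Hj) in Hu.
  case: (leqP N i) => Hi; first by rewrite (Hf i Hi) in Hu; lia.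
  have := bounded_lt (conj Hf Hinj) Hi; lia.
rewrite -big_filter; apply: perm_big; apply: uniq_perm.
- by rewrite filter_uniq // uniq_pairsN.
- exact: uniq_pairsN.
- move=> p; rewrite mem_filter !mem_pairsN; lia.
Qed.

Lemma sum_eqx (L : seq (nat * nat)) x c : uniq L -> x \in L -> \sum_(p <- L) (p == x) * c = c.
Proof.
elim: L => //= y L IH /andP[Hy HL]; rewrite big_cons in_cons; case: (eqVneq x y) => [->|Hne] /= Hx.
  rewrite mul1n big1_seq ?addn0 // => p /andP[_ Hp]; case: eqP => // E; by rewrite -E Hp in Hy.
by rewrite mul0n add0n IH.
Qed.

Lemma inv_step N u a : a.+1 < N ->
  inv N (mulp u (stransp a)) + (u a.+1 < u a) = inv N u + (u a < u a.+1).
Proof.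
move=> HaN.
pose f := fun p : nat * nat => (stransp a p.1, stransp a p.2).
have finv : forall p, f (f p) = p by case=> i j; rewrite /f /= !stransp_inv.
have slt : forall i, (stransp a i < N) = (i < N).
  by move=> i; rewrite /stransp; case: eqP => ?; [|case: eqP => ?]; lia.
have Hperm : perm_eq (pairsN N) (map f (pairsN N)).
  apply: uniq_perm; first exact: uniq_pairsN.
    by rewrite map_inj_uniq ?uniq_pairsN //; exact: can_inj finv.
  move=> p; rewrite -{2}(finv p) mem_map; last exact: can_inj finv.
  by rewrite !mem_pairsN /f /= !slt.
rewrite /inv (perm_big _ Hperm) big_map.
have Hin1 : (a, a.+1) \in pairsN N by rewrite mem_pairsN /=; lia.
have Hin2 : (a.+1, a) \in pairsN N by rewrite mem_pairsN /=; lia.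
rewrite -{1}(sum_eqx (u a.+1 < u a) (uniq_pairsN N) Hin1).
rewrite -{1}(sum_eqx (u a < u a.+1) (uniq_pairsN N) Hin2).
rewrite -!big_split /=; apply: eq_bigr => -[i j] _.
rewrite /invb /f /mulp /= !stransp_inv !xpair_eqE /stransp.
by repeat (case: eqP => ?; subst => /=); try lia.
Qed.

Lemma inv_id N : inv N idp = 0.
Proof. by rewrite /inv big1 // => -[i j] _; rewrite /invb /idp /=; apply/eqP; rewrite eqb0; lia. Qed.

Lemma inv_word N r : all (fun a => a.+1 < N) r -> inv N (wordprod r) <= size r.
Proof.
elim/last_ind: r => [|r a IH]; first by rewrite /= inv_id.
rewrite all_rcons => /andP[Ha Hr]; rewrite wordprod_rcons size_rcons.
have := inv_step (wordprod r) Ha; have := IH Hr; lia.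
Qed.

Lemma nodesc_id N u : bounded N u -> u 0 = 0 ->
  (forall a, 0 < a -> a.+1 < N -> u a < u a.+1) -> u = idp.
Proof.
move=> Hb H0 Hd; have [Hf Hinj] := Hb.
have pos : forall i, 0 < i -> 0 < u i.
  move=> i Hi; rewrite lt0n; apply/eqP => E; rewrite -H0 in E; move/Hinj: E; lia.
have up : forall i, 0 < i -> i < N -> i <= u i.
  elim=> // i IH _ Hi; case: i IH Hi => [|i] IH Hi; first exact: pos.
  have := IH isT (ltnW Hi); have := Hd i.+1 isT Hi; lia.
have down : forall k i, i + k = N.-1 -> 0 < i -> u i <= i.
  elim=> [|k IH] i Hik Hi.
    have := bounded_lt Hb (_ : i < N); lia.
  have := IH i.+1 ltac:(lia) isT; have := Hd i Hi ltac:(lia); lia.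
apply: functional_extensionality => i; rewrite /idp.
case: (leqP N i) => HiN; first exact: Hf.
case: i HiN => [|i] HiN; first exact: H0.
have := up i.+1 isT HiN; have := down (N.-1 - i.+1) i.+1 ltac:(lia) isT; lia.
Qed.

Lemma desc_or_id N u : bounded N u -> u 0 = 0 ->
  u = idp \/ exists a, [/\ 0 < a, a.+1 < N & u a.+1 < u a].
Proof.
move=> Hb H0.
case: (boolP (has (fun a => (0 < a) && (a.+1 < N) && (u a.+1 < u a)) (iota 0 N))) => Hhas.
  right; case/hasP: Hhas => a _ /andP[/andP[Ha HaN] Hlt]; by exists a.
left; apply: (nodesc_id Hb H0) => a Ha HaN.
move/hasPn: Hhas => /(_ a); rewrite mem_iota Ha HaN /= => /(_ ltac:(lia)) H.
have Hne : u a != u a.+1 by apply/eqP => /(proj2 Hb); lia.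
lia.
Qed.

Lemma exists_word N u : bounded N u -> u 0 = 0 ->
  exists r, [/\ valid_word r, all (fun a => a.+1 < N) r, size r = inv N u & wordprod r = u].
Proof.
move Hn : (inv N u) => n; elim: n u Hn => [|n IH] u Hn Hb H0;
  (case: (desc_or_id Hb H0) => [Eid|[a [Ha HaN Hlt]]];
   [by exists [::]; split => //; rewrite -Hn Eid inv_id | ]);
  have Hst := inv_step u HaN; have Hlt' : (u a < u a.+1) = false by lia.
  by rewrite Hlt' Hlt in Hst; lia.
pose v := mulp u (stransp a).
have Hv : inv N v = n by rewrite Hlt' Hlt in Hst; rewrite /v; lia.
have Hbv : bounded N v.
  split; last by move=> x y; rewrite /v /mulp => /(proj2 Hb) /stransp_inj.
  move=> i Hi; rewrite /v /mulp stransp_o; [exact: (proj1 Hb) | lia | lia].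
have Hv0 : v 0 = 0 by rewrite /v /mulp stransp_o //; lia.
have [r [Hr1 Hr2 Hr3 Hr4]] := IH v Hv Hbv Hv0.
exists (rcons r a); split.
- by rewrite /valid_word all_rcons Ha.
- by rewrite all_rcons HaN.
- by rewrite size_rcons Hr3.
- rewrite wordprod_rcons Hr4; apply: functional_extensionality => i.
  by rewrite /v /mulp stransp_inv.
Qed.

Lemma coxlen_inv N r : valid_word r -> all (fun a => a.+1 < N) r ->
  is_coxlen (wordprod r) (inv N (wordprod r)).
Proof.
move=> Hv HN.
have Hb : bounded N (wordprod r) by split; [exact: wordprod_fix | exact: wordprod_inj].
split.
  have [r' [H1 H2 H3 H4]] := exists_word Hb (wordprod0 Hv).
  by exists r'.
move=> r' Hv' Hr'.
rewrite -(inv_ext Hb (leq_maxl N (bnd r'))) -Hr'.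
apply: inv_word; apply: all_mono (bnd_all r'); exact: leq_maxr.
Qed.

Lemma coxlen_uniq u k k' : is_coxlen u k -> is_coxlen u k' -> k = k'.
Proof.
move=> [[r [Hv [Hs Hw]]] H1] [[r' [Hv' [Hs' Hw']]] H2].
have := H1 r' Hv' Hw'; have := H2 r Hv Hw; lia.
Qed.

Definition sstar (u : perm_fun) a : perm_fun := if u a < u a.+1 then mulp u (stransp a) else u.

Lemma star_sstar r a : valid_word r -> 0 < a -> star (wordprod r) a = sstar (wordprod r) a.
Proof.
move=> Hv Ha.
pose N := maxn (bnd r) a.+2.
have HrN : all (fun b => b.+1 < N) r by apply: all_mono (bnd_all r); exact: leq_maxl.
have HaN : a.+1 < N by rewrite leq_max leqnn orbT.
have Hc1 := coxlen_inv Hv HrN.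
have Hc2 : is_coxlen (mulp (wordprod r) (stransp a)) (inv N (mulp (wordprod r) (stransp a))).
  rewrite -wordprod_rcons; apply: coxlen_inv; first by rewrite /valid_word all_rcons Ha.
  by rewrite all_rcons HaN.
have Hst := inv_step (wordprod r) HaN.
have Hne : wordprod r a != wordprod r a.+1 by apply/eqP => /wordprod_inj; lia.
rewrite /star /sstar; case: excluded_middle_informative => [[k [Hk1 Hk2]]|Hn].
  have e1 := coxlen_uniq Hk1 Hc1; have e2 := coxlen_uniq Hk2 Hc2.
  case: ifP => // Hlt; exfalso; lia.
case: ifP => // Hlt; exfalso; apply: Hn; exists (inv N (wordprod r)); split => //.
have E : inv N (mulp (wordprod r) (stransp a)) = (inv N (wordprod r)).+1 by lia.
by rewrite -E.
Qed.

Lemma fold_eq w r : valid_word r -> all (fun a => 0 < a) w ->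
  foldl star (wordprod r) w = foldl sstar (wordprod r) w.
Proof.
elim: w r => //= a w IH r Hr /andP[Ha Hw]; rewrite star_sstar //.
have [r' [Hr' ->]] : exists r', valid_word r' /\ sstar (wordprod r) a = wordprod r'.
  rewrite /sstar; case: ifP => _; last by exists r.
  by exists (rcons r a); rewrite wordprod_rcons /valid_word all_rcons Ha.
exact: IH.
Qed.

Definition heq (w1 w2 : seq nat) :=
  forall u : perm_fun, injective u -> foldl sstar u w1 = foldl sstar u w2.

Lemma sstar_inj u a : injective u -> injective (sstar u a).
Proof. by rewrite /sstar => Hu; case: ifP => // _ x y; rewrite /mulp => /Hu /stransp_inj. Qed.

Lemma foldl_inj u w : injective u -> injective (foldl sstar u w).
Proof. by elim: w u => //= a w IH u Hu; apply: IH; exact: sstar_inj. Qed.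

Lemma heq_refl w : heq w w. Proof. by []. Qed.
Lemma heq_sym w1 w2 : heq w1 w2 -> heq w2 w1. Proof. by move=> H u Hu; rewrite H. Qed.
Lemma heq_trans w1 w2 w3 : heq w1 w2 -> heq w2 w3 -> heq w1 w3.
Proof. by move=> H1 H2 u Hu; rewrite H1 // H2. Qed.
Lemma heq_cat w1 w2 w3 w4 : heq w1 w2 -> heq w3 w4 -> heq (w1 ++ w3) (w2 ++ w4).
Proof. by move=> H12 H34 u Hu; rewrite !foldl_cat H12 // H34 //; apply: foldl_inj. Qed.

Lemma sstar_up u a : u a < u a.+1 -> sstar u a = mulp u (stransp a).
Proof. by rewrite /sstar => ->. Qed.
Lemma sstar_dn u a : ~~ (u a < u a.+1) -> sstar u a = u.
Proof. by rewrite /sstar => /negbTE ->. Qed.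

Lemma heq_idem a : heq [:: a; a] [:: a].
Proof.
move=> u _ /=; case: (boolP (u a < u a.+1)) => H.
  by rewrite (sstar_up H) sstar_dn // ms_a ms_a1 -leqNgt ltnW.
by rewrite (sstar_dn H) (sstar_dn H).
Qed.

Lemma st_a a : stransp a a = a.+1. Proof. by rewrite /stransp eqxx. Qed.
Lemma st_a1 a : stransp a a.+1 = a. Proof. by rewrite /stransp eqxx; case: eqP => //; lia. Qed.

Lemma stransp_comm a b i : (a.+1 < b) || (b.+1 < a) ->
  stransp a (stransp b i) = stransp b (stransp a i).
Proof.
move=> H.
case: (eqVneq i a) => [->|H1].
  by rewrite st_a (stransp_o (i:=a)) ?st_a ?(stransp_o (i:=a.+1)) //; lia.
case: (eqVneq i a.+1) => [->|H2].
  by rewrite st_a1 (stransp_o (i:=a.+1)) ?st_a1 ?(stransp_o (i:=a)) //; lia.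
case: (eqVneq i b) => [->|H3].
  by rewrite st_a (stransp_o (i:=b)) ?st_a ?(stransp_o (i:=b.+1)) //; lia.
case: (eqVneq i b.+1) => [->|H4].
  by rewrite st_a1 (stransp_o (i:=b.+1)) ?st_a1 ?(stransp_o (i:=b)) //; lia.
by rewrite !(stransp_o (i:=i)).
Qed.

Lemma heq_comm a b : (a.+1 < b) || (b.+1 < a) -> heq [:: a; b] [:: b; a].
Proof.
move=> Hab u _ /=.
have Eb : forall v : perm_fun, mulp v (stransp a) b = v b by move=> v; rewrite ms_o //; lia.
have Eb1 : forall v : perm_fun, mulp v (stransp a) b.+1 = v b.+1 by move=> v; rewrite ms_o //; lia.
have Ea : forall v : perm_fun, mulp v (stransp b) a = v a by move=> v; rewrite ms_o //; lia.
have Ea1 : forall v : perm_fun, mulp v (stransp b) a.+1 = v a.+1 by move=> v; rewrite ms_o //; lia.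
case: (boolP (u a < u a.+1)) => H1; case: (boolP (u b < u b.+1)) => H2.
- rewrite (sstar_up H1) (sstar_up H2) sstar_up ?Eb ?Eb1 // sstar_up ?Ea ?Ea1 //.
  by apply: functional_extensionality => i; rewrite /mulp stransp_comm.
- rewrite (sstar_dn H2) (sstar_up H1) sstar_dn //; by rewrite Eb Eb1.
- rewrite (sstar_dn H1) (sstar_up H2) sstar_dn //; by rewrite Ea Ea1.
- by rewrite (sstar_dn H1) (sstar_dn H2) !sstar_dn.
Qed.

Lemma msA0 (v : perm_fun) a : mulp v (stransp a.+1) a = v a.
Proof. by rewrite ms_o //; lia. Qed.
Lemma msB2 (v : perm_fun) a : mulp v (stransp a) a.+2 = v a.+2.
Proof. by rewrite ms_o //; lia. Qed.
Lemma stA0 a : stransp a.+1 a = a. Proof. by rewrite stransp_o //; lia. Qed.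
Lemma stB2 a : stransp a a.+2 = a.+2. Proof. by rewrite stransp_o //; lia. Qed.

Ltac ev := do 3 rewrite ?ms_a ?ms_a1 ?msA0 ?msB2.
Ltac step := match goal with |- context [sstar ?v ?b] =>
   lazymatch v with context [sstar] => fail | _ =>
   first [ rewrite (@sstar_up v b); [ | ev; lia] | rewrite (@sstar_dn v b); [ | ev; lia] ] end end.
Ltac sts := do 4 rewrite ?st_a ?st_a1 ?stA0 ?stB2.

Lemma heq_braid a : heq [:: a.+1; a; a.+1] [:: a; a.+1; a].
Proof.
move=> u Hu /=.
have H1 : u a != u a.+1 by apply/eqP => /Hu; lia.
have H2 : u a.+1 != u a.+2 by apply/eqP => /Hu; lia.
have H3 : u a != u a.+2 by apply/eqP => /Hu; lia.
case: (ltnP (u a) (u a.+1)) => ?; case: (ltnP (u a.+1) (u a.+2)) => ?; case: (ltnP (u a) (u a.+2)) => ?.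
all: repeat step.
all: apply: functional_extensionality => i; rewrite /mulp.
all: case: (eqVneq i a) => [->|?]; [sts => // | case: (eqVneq i a.+1) => [->|?];
   [sts => // | case: (eqVneq i a.+2) => [->|?]; [sts => // | rewrite ?(stransp_o (i:=i)) //]]].
Qed.

Lemma heq_commw x w : all (fun y => (x.+1 < y) || (y.+1 < x)) w -> heq (x :: w) (w ++ [:: x]).
Proof.
elim: w => [|y w IH] /=; first by move=> _; exact: heq_refl.
case/andP => H Hw.
apply: (@heq_trans _ ([:: y; x] ++ w)); first exact: (heq_cat (heq_comm H) (heq_refl w)).
exact: (heq_cat (heq_refl [:: y]) (IH Hw)).
Qed.

Lemma heq_commww (Y W : seq nat) :
  all (fun x => all (fun y => (x.+1 < y) || (y.+1 < x)) W) Y -> heq (Y ++ W) (W ++ Y).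
Proof.
elim: Y => [|x Y IH] /=; first by rewrite cats0 => _; exact: heq_refl.
case/andP => Hx HY.
apply: (@heq_trans _ ([:: x] ++ (W ++ Y))); first exact: (heq_cat (heq_refl [:: x]) (IH HY)).
rewrite -cat_rcons -cats1 catA.
exact: (heq_cat (heq_commw Hx) (heq_refl Y)).
Qed.

Fixpoint dec (b n : nat) : seq nat := if n is n'.+1 then (b + n') :: dec b n' else [::].

Lemma dec_mem b n y : y \in dec b n -> b <= y < b + n.
Proof. elim: n => //= n IH; rewrite in_cons => /orP[/eqP ->|/IH]; lia. Qed.

Lemma dec_split b k : dec b k.+1 = dec b.+1 k ++ [:: b].
Proof. elim: k => [|k IH]; first by rewrite /= addn0. have -> : dec b k.+2 = (b + k.+1) :: dec b k.+1 by []. by rewrite IH /= addSnnS. Qed.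

Lemma heq_I b k : heq (dec b k.+1 ++ dec b.+1 k) (dec b k ++ dec b k.+1).
Proof.
elim: k => [|k IH]; first exact: heq_refl.
set x := b + k.
have E1 : dec b k.+2 = x.+1 :: x :: dec b k by rewrite /= addnS.
have E2 : dec b.+1 k.+1 = x.+1 :: dec b.+1 k by rewrite /= addSn.
have E3 : dec b k.+1 = x :: dec b k by [].
have Hc : all (fun y => (x.+2 < y) || (y.+1 < x.+1)) (dec b k) by apply/allP => y /dec_mem; lia.
have C := heq_commw Hc.
rewrite E1 E2 E3 /= in IH *.
apply: (@heq_trans _ ([:: x.+1; x] ++ (x.+1 :: dec b k) ++ dec b.+1 k)).
  have -> : x.+1 :: x :: dec b k ++ x.+1 :: dec b.+1 k =
            [:: x.+1; x] ++ (dec b k ++ [:: x.+1]) ++ dec b.+1 k by rewrite -catA.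
  exact: (heq_cat (heq_refl _) (heq_cat (heq_sym C) (heq_refl _))).
apply: (@heq_trans _ ([:: x; x.+1; x] ++ dec b k ++ dec b.+1 k)).
  exact: (heq_cat (heq_braid x) (heq_refl (dec b k ++ dec b.+1 k))).
apply: (@heq_trans _ ([:: x; x.+1] ++ dec b k ++ x :: dec b k)).
  exact: (heq_cat (heq_refl [:: x; x.+1]) IH).
have -> : x :: dec b k ++ x.+1 :: x :: dec b k = [:: x] ++ (dec b k ++ [:: x.+1]) ++ x :: dec b k
  by rewrite -catA.
exact: (heq_cat (heq_refl [:: x]) (heq_cat C (heq_refl _))).
Qed.

Lemma heq_II b k : heq (dec b k.+1 ++ dec b k.+1) (dec b k ++ dec b k.+1).
Proof.
apply: (@heq_trans _ ((dec b k.+1 ++ dec b.+1 k) ++ [:: b])).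
  by rewrite {2}dec_split -!catA; exact: heq_refl.
apply: (@heq_trans _ ((dec b k ++ dec b k.+1) ++ [:: b])).
  exact: (heq_cat (heq_I b k) (heq_refl _)).
apply: (@heq_trans _ (dec b k ++ dec b.+1 k ++ [:: b; b])).
  by rewrite dec_split -!catA; exact: heq_refl.
apply: (@heq_trans _ (dec b k ++ dec b.+1 k ++ [:: b])).
  exact: (heq_cat (heq_refl _) (heq_cat (heq_refl _) (heq_idem b))).
rewrite dec_split; exact: heq_refl.
Qed.

Lemma read_le_trans : transitive read_le.
Proof. move=> y x z; rewrite /read_le; case: x => x1 x2; case: y => y1 y2; case: z => z1 z2 /=; lia. Qed.
Lemma read_le_anti : antisymmetric read_le.
Proof.
move=> [x1 x2] [y1 y2]; rewrite /read_le /= => H.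
have [-> ->] : x1 = y1 /\ x2 = y2 by lia. by [].
Qed.
Lemma read_le_total : total read_le.
Proof. move=> [x1 x2] [y1 y2]; rewrite /read_le /=; lia. Qed.

Lemma sorted_cat2 (s1 s2 : seq (nat * nat)) : sorted read_le s1 -> sorted read_le s2 ->
  (forall x y, x \in s1 -> y \in s2 -> read_le x y) -> sorted read_le (s1 ++ s2).
Proof.
rewrite !(sorted_pairwise read_le_trans) pairwise_cat => H1 H2 H; rewrite H1 H2 !andbT.
by apply/allrelP => x y; apply: H.
Qed.

Lemma sort_split (P : pred (nat * nat)) s :
  (forall x y, P x -> ~~ P y -> read_le x y) ->
  sort read_le s = sort read_le (filter P s) ++ sort read_le (filter (predC P) s).
Proof.
move=> HP; apply: (sorted_eq read_le_trans read_le_anti).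
- exact: (sort_sorted read_le_total).
- apply: sorted_cat2; try exact: (sort_sorted read_le_total).
  move=> x y; rewrite !mem_sort !mem_filter => /andP[Hx _] /andP[Hy _]; exact: HP.
- rewrite perm_sort perm_sym; apply: perm_trans _ (permEl (perm_filterC P s)).
  by apply: perm_cat; apply: permEl; exact: perm_sort.
Qed.

Definition rk (m c d : nat) (p : nat * nat) : nat :=
  if p.1 < m then 0 else if p.1 == m then (if d < p.2 then 0 else if c < p.2 then 1 else 2)
  else if p.1 == m.+1 then (if d <= p.2 then 2 else if c <= p.2 then 3 else 4) else 4.

Lemma rk_le m c d x y : rk m c d x < rk m c d y -> read_le x y.
Proof. case: x => x1 x2; case: y => y1 y2; rewrite /rk /read_le /=; do !case: ifP; lia. Qed.

Lemma rk_bound m c d x : rk m c d x <= 4.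
Proof. rewrite /rk; do !case: ifP; lia. Qed.

Definition B m c d i (s : seq (nat * nat)) :=
  sort read_le (filter (fun p => rk m c d p == i) s).

Lemma filter2 (T : Type) (a b : pred T) s : filter a (filter b s) = filter (fun x => b x && a x) s.
Proof. elim: s => [|x s IH] //=; case Hb: (b x) => /=; rewrite IH //; by case: (a x). Qed.

Lemma sort_step m c d i s :
  sort read_le (filter (fun p => i <= rk m c d p) s) =
  B m c d i s ++ sort read_le (filter (fun p => i < rk m c d p) s).
Proof.
rewrite (@sort_split (fun p => rk m c d p <= i)); last first.
  by move=> x y /= Hx Hy; apply: (rk_le (m:=m) (c:=c) (d:=d)); rewrite -ltnNge in Hy; lia.
rewrite /B !filter2; congr (_ ++ _); congr (sort _ _); apply: eq_filter => p /=; lia.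
Qed.

Lemma sort5 m c d s : sort read_le s =
  B m c d 0 s ++ B m c d 1 s ++ B m c d 2 s ++ B m c d 3 s ++ B m c d 4 s.
Proof.
have E0 : s = filter (fun p => 0 <= rk m c d p) s by rewrite (eq_filter (a2 := predT)) ?filter_predT.
rewrite {1}E0 sort_step.
have E1 := sort_step m c d 1 s; rewrite E1.
have E2 := sort_step m c d 2 s; rewrite E2.
have E3 := sort_step m c d 3 s; rewrite E3.
have E4 := sort_step m c d 4 s; rewrite E4.
have -> : filter (fun p => 4 < rk m c d p) s = [::].
  by apply/eqP; rewrite -(negbK (_ == _)) -has_filter; apply/hasPn => p _; have := rk_bound m c d p; lia.
by rewrite /= cats0.
Qed.

Fixpoint decl (r lo n : nat) : seq (nat * nat) :=
  if n is n'.+1 then (r, lo + n') :: decl r lo n' else [::].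

Lemma mem_decl r lo n x : (x \in decl r lo n) = (x.1 == r) && (lo <= x.2 < lo + n).
Proof.
case: x => x1 x2 /=; elim: n => [|n IH] /=; first by rewrite in_nil; lia.
by rewrite in_cons IH xpair_eqE; lia.
Qed.

Lemma uniq_decl r lo n : uniq (decl r lo n).
Proof. elim: n => //= n ->; rewrite mem_decl /=; lia. Qed.

Lemma sorted_decl r lo n : sorted read_le (decl r lo n).
Proof.
elim: n => //= n IH; rewrite (path_sortedE read_le_trans) IH andbT.
by apply/allP => -[x1 x2]; rewrite mem_decl /read_le /=; lia.
Qed.

Definition lbl (p : nat * nat) := p.1 + p.2 - 1.

Lemma lbl_decl r lo n : 0 < r + lo -> map lbl (decl r lo n) = dec (r + lo - 1) n.
Proof. move=> H; elim: n => //= n ->; congr (_ :: _); rewrite /lbl /=; lia. Qed.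

Lemma block s (P : pred (nat * nat)) r lo n : uniq s ->
  (forall x, (x \in s) && P x = (x \in decl r lo n)) ->
  sort read_le (filter P s) = decl r lo n.
Proof.
move=> Hu H; apply: (sorted_eq read_le_trans read_le_anti).
- exact: (sort_sorted read_le_total).
- exact: sorted_decl.
- apply: uniq_perm; first by rewrite sort_uniq filter_uniq.
    exact: uniq_decl.
  by move=> x; rewrite mem_sort mem_filter andbC H.
Qed.

Lemma same s s' (P : pred (nat * nat)) : uniq s -> uniq s' ->
  (forall x, P x -> (x \in s) = (x \in s')) ->
  sort read_le (filter P s) = sort read_le (filter P s').
Proof.
move=> Hu Hu' H; apply/(perm_sortP read_le_total read_le_trans read_le_anti).
apply: uniq_perm; rewrite ?filter_uniq // => x; rewrite !mem_filter.
by case Hx: (P x) => //=; rewrite H.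
Qed.

Definition W m c d i s := map lbl (B m c d i s).

Lemma rk2 m c d p : rk m c d p == 2 ->
  ((p.1 == m) && (p.2 <= c)) || ((p.1 == m.+1) && (d <= p.2)).
Proof. rewrite /rk; do !case: ifP; lia. Qed.

Lemma pos_word S : pipe_dream S -> all (fun a => 0 < a) (reading_word S).
Proof.
case/andP => _ /allP H; apply/allP => a /mapP [p]; rewrite mem_sort => /H /andP[H1 H2] ->; lia.
Qed.

Lemma help (b q r e : bool) : (r -> b) -> (e -> ~~ b) -> q = r || e -> b && q = r.
Proof.
move=> H1 H2 ->; case: r H1 => [/(_ isT) -> //|_].
by case: e H2 => [/(_ isT) /negbTE -> //|_]; rewrite andbF.
Qed.

Lemma form S m c k : pipe_dream S -> 0 < m -> 0 < c ->
  (forall j, c < j -> j < c + k + 1 -> ((m, j) \in S) /\ ((m.+1, j) \in S)) ->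
  (m, c) \notin S -> (m.+1, c + k + 1) \notin S ->
  heq (reading_word S)
    (W m c (c + k + 1) 0 S ++
     ((if (m, c + k + 1) \in S then dec (m + c) k.+1 else dec (m + c) k) ++
      (if (m.+1, c) \in S then dec (m + c) k.+1 else dec (m + c).+1 k)) ++
     (W m c (c + k + 1) 2 S ++ W m c (c + k + 1) 4 S)).
Proof.
move=> HS Hm Hc Hint Hmc Hmd.
have Hu : uniq S by case/andP: HS.
set d := c + k + 1.
have HB1 : W m c d 1 S = if (m, d) \in S then dec (m + c) k.+1 else dec (m + c) k.
  case: ifP => Hin.
    rewrite /W /B (@block _ _ m c.+1 k.+1) // ?lbl_decl; [congr dec; lia | lia |].
    move=> [x1 x2]; rewrite mem_decl /=; apply: (help (e := false)) => //.
      move=> /andP[/eqP -> H]; case: (ltnP x2 d) => H2; first by case: (Hint x2 ltac:(lia) H2).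
      by have -> : x2 = d by lia.
    rewrite /rk /= orbF; do !case: ifP; lia.
  rewrite /W /B (@block _ _ m c.+1 k) // ?lbl_decl; [congr dec; lia | lia |].
  move=> [x1 x2]; rewrite mem_decl /=; apply: (help (e := (x1 == m) && (x2 == d))).
  - move=> /andP[/eqP -> H]; by case: (Hint x2 ltac:(lia) ltac:(lia)).
  - by move=> /andP[/eqP -> /eqP ->]; rewrite Hin.
  - rewrite /rk /=; do !case: ifP; lia.
have HB3 : W m c d 3 S = if (m.+1, c) \in S then dec (m + c) k.+1 else dec (m + c).+1 k.
  case: ifP => Hin.
    rewrite /W /B (@block _ _ m.+1 c k.+1) // ?lbl_decl; [congr dec; lia | lia |].
    move=> [x1 x2]; rewrite mem_decl /=; apply: (help (e := false)) => //.
      move=> /andP[/eqP -> H]; case: (ltnP c x2) => H2; first by case: (Hint x2 H2 ltac:(lia)).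
      by have -> : x2 = c by lia.
    rewrite /rk /= orbF; do !case: ifP; lia.
  rewrite /W /B (@block _ _ m.+1 c.+1 k) // ?lbl_decl; [congr dec; lia | lia |].
  move=> [x1 x2]; rewrite mem_decl /=; apply: (help (e := (x1 == m.+1) && (x2 == c))).
  - move=> /andP[/eqP -> H]; by case: (Hint x2 ltac:(lia) ltac:(lia)).
  - by move=> /andP[/eqP -> /eqP ->]; rewrite Hin.
  - rewrite /rk /=; do !case: ifP; lia.
have E : reading_word S = W m c d 0 S ++ W m c d 1 S ++ W m c d 2 S ++ W m c d 3 S ++ W m c d 4 S.
  by rewrite /reading_word (sort5 m c d) !map_cat.
rewrite E HB1 HB3.
set X := (if _ then _ else _); set Y := (if _ then _ else _).
apply: heq_cat (heq_refl _) _.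
rewrite -catA; apply: heq_cat (heq_refl X) _.
rewrite !catA; apply: heq_cat _ (heq_refl _).
apply: heq_sym; apply: heq_commww.
apply/allP => x Hx; apply/allP => y /mapP [p].
rewrite /B mem_sort mem_filter => /andP[/rk2 Hp HpS] ->.
have Hx' : m + c <= x <= m + c + k.
  by move: Hx; rewrite /Y; case: ifP => _ /dec_mem; lia.
case: p Hp HpS => p1 p2 /= Hp HpS.
have Hne1 : (p1, p2) != (m, c) by apply: contraNneq Hmc => <-.
have Hne2 : (p1, p2) != (m.+1, d) by apply: contraNneq Hmd => <-.
have Hpos : 0 < p2 by case/andP: HS => _ /allP /(_ _ HpS) /andP[].
rewrite /lbl /=; move: Hne1 Hne2; rewrite !xpair_eqE; lia.
Qed.

Lemma dem_sstar S : pipe_dream S -> demazure S = foldl sstar idp (reading_word S).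
Proof.
move=> HS; rewrite /demazure -[idp]/(wordprod [::]) fold_eq //; exact: pos_word.
Qed.

Lemma rk_md m c d : c < d -> rk m c d (m, d) = 1.
Proof. by move=> H; rewrite /rk /= ltnn eqxx ltnn H. Qed.
Lemma rk_m1c m c d : c < d -> rk m c d (m.+1, c) = 3.
Proof. move=> H; rewrite /rk /= eqxx; do !case: ifP; lia. Qed.

Lemma chute_dem D D' : pipe_dream D -> pipe_dream D' -> chute_move D D' -> demazure D = demazure D'.
Proof.
move=> HD HD' [m [c [d H]]].
have [Hfr [Hmc [Hmd [Hm1d HE]]]] : chute_frame D m c d /\ (m, c) \notin D /\ (m, d) \in D /\
   (m.+1, d) \notin D /\
   (forall x, x != (m, d) -> x != (m.+1, c) -> (x \in D') = (x \in D)).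
  case: (H) => [[? [? [? [? [? HE]]]]] | [[? [? [? [? [? HE]]]]] | [? [? [? [? [? HE]]]]]]];
    (do 4! (split; first done)); move=> x H1 H2; rewrite HE ?(negbTE H1) ?(negbTE H2) /= ?orbF //.
have Hcases : [/\ (m.+1, c) \notin D, (m, d) \notin D' & (m.+1, c) \in D'] \/
              [/\ (m.+1, c) \in D, (m, d) \notin D' & (m.+1, c) \in D'] \/
              [/\ (m.+1, c) \in D, (m, d) \in D' & (m.+1, c) \notin D'].
  have ne1 : ((m.+1, c) == (m, d)) = false by rewrite xpair_eqE; lia.
  have ne2 : ((m, d) == (m.+1, c)) = false by rewrite xpair_eqE; lia.
  case: H => [[_ [_ [Hb [_ [_ HE']]]]] | [[_ [_ [Hb [_ [_ HE']]]]] | [_ [_ [Hb [_ [_ HE']]]]]]].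
  - by left; split; rewrite // !HE' ?eqxx ?ne1 ?ne2 /= ?orbT.
  - by right; left; split; rewrite // !HE' ?eqxx ?ne1 ?ne2 /= ?Hb.
  - by right; right; split; rewrite // !HE' ?eqxx ?ne1 ?ne2 /= ?Hb.
have [Hm [Hc [Hcd Hint]]] := Hfr.
have [k Ed] : exists k, d = c + k + 1 by exists (d - c.+1); lia.
subst d.
have Hint' : forall j, c < j -> j < c + k + 1 -> ((m, j) \in D') /\ ((m.+1, j) \in D').
  move=> j H1 H2; have [H3 H4] := Hint j H1 H2.
  by rewrite !HE ?H3 ?H4 // !xpair_eqE; lia.
have Hmc' : (m, c) \notin D' by rewrite HE // !xpair_eqE; lia.
have Hm1d' : (m.+1, c + k + 1) \notin D' by rewrite HE // !xpair_eqE; lia.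
have F := form HD Hm Hc Hint Hmc Hm1d.
have F' := form HD' Hm Hc Hint' Hmc' Hm1d'.
have Hu : uniq D by case/andP: HD.
have Hu' : uniq D' by case/andP: HD'.
have EW : forall i, i != 1 -> i != 3 -> W m c (c + k + 1) i D = W m c (c + k + 1) i D'.
  move=> i H1 H3; rewrite /W /B (same (s' := D')) // => x /eqP Hx.
  rewrite HE //.
    by apply: contraNneq H1 => E; rewrite -Hx E rk_md //; lia.
  by apply: contraNneq H3 => E; rewrite -Hx E rk_m1c //; lia.
have idinj : injective idp by move=> x y.
rewrite !dem_sstar // (F idp idinj) (F' idp idinj) -!EW //.
apply: heq_cat (heq_refl _) (heq_cat _ (heq_refl _)) idp idinj.
rewrite Hmd.
case: Hcases => [[H1 H2 H3]|[[H1 H2 H3]|[H1 H2 H3]]].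
- rewrite (negbTE H1) (negbTE H2) H3; exact: heq_I.
- rewrite H1 (negbTE H2) H3; exact: heq_II.
- rewrite H1 H2 (negbTE H3); exact: heq_trans (heq_II _ _) (heq_sym (heq_I _ _)).
Qed.

Theorem theorem2p2 (w : perm_fun) (D D' : seq (nat * nat)) :
  in_Sinf w -> in_P w D -> pipe_dream D' ->
  chute_move D D' \/ inv_chute_move D D' ->
  in_P w D'.
Proof.
move=> _ [HD Hw] HD' [H|H]; split => //.
  by rewrite -(chute_dem HD HD' H).
by rewrite (chute_dem HD' HD H).
Qed.
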